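(* Let $\mathcal A$ be an arrangement of $n$ affine lines in $\mathbb C^2$ whose graph of double points $\Gamma$ is connected, and let $\widetilde{\mathcal A}=c\mathcal A$ be its cone. Then the resonance variety $\mathcal R^1(\widetilde{\mathcal A})$ has no global component.
   Context: The graph of double points $\Gamma$ of $\mathcal A$ has vertex set $\mathcal A$, with an edge $\{\ell_i,\ell_j\}$ iff $\ell_i\cap\ell_j$ is a point lying on no other line of $\mathcal A$. The cone $c\mathcal A=\{\widetilde H_0,\dots,\widetilde H_n\}$ is the central arrangement in $\mathbb C^3$ consisting of $z_0=0$ and the homogenizations of the lines of $\mathcal A$. Let $A^\bullet$ be the Orlik–Solomon algebra of $\widetilde{\mathcal A}$ over $\mathbb C$, with $A^1$ having the standard basis $e_0,\dots,e_n$ corresponding to the hyperplanes. The resonance variety is $\mathcal R^1(\widetilde{\mathcal A})=\{a\in A^1: H^1(A^\bullet,a\wedge\cdot)\ne 0\}$; it is a finite union of linear subspaces (its components). A component is called global if it is not contained in any coordinate hyperplane of $A^1$ (with respect to the basis $e_0,\dots,e_n$). *)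

(* Defs.v *)
From HB Require Import structures.
From mathcomp Require Import all_boot all_order all_algebra.
From Stdlib Require Import Relations.
Set Implicit Arguments. Unset Strict Implicit. Unset Printing Implicit Defensive.
Import Order.TTheory GRing.Theory Num.Theory.
Local Open Scope ring_scope.

Definition on_line (C : numClosedFieldType) (n : nat) (a b c : 'I_n -> C)
  (i : 'I_n) (p : C * C) : Prop :=
  a i * p.1 + b i * p.2 + c i = 0.

Definition is_line_arrangement (C : numClosedFieldType) (n : nat)
  (a b c : 'I_n -> C) : Prop :=
  (forall i, (a i, b i) <> (0, 0)) /\
  (forall i j : 'I_n, i <> j -> exists p, ~ (on_line a b c i p <-> on_line a b c j p)).

Definition double_point_edge (C : numClosedFieldType) (n : nat)
  (a b c : 'I_n -> C) (i j : 'I_n) : Prop :=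
  i <> j /\
  exists p, on_line a b c i p /\ on_line a b c j p /\
    (forall q, on_line a b c i q -> on_line a b c j q -> q = p) /\
    (forall k, k <> i -> k <> j -> ~ on_line a b c k p).

Definition graph_connected (n : nat) (E : 'I_n -> 'I_n -> Prop) : Prop :=
  forall i j, clos_refl_trans _ E i j.

(* Cone cA in C^3, hyperplanes indexed by 'I_n.+1: index 0 is z_0 = 0, index
   (lift ord0 i) is a i * z_1 + b i * z_2 + c i * z_0 = 0.  Normal vectors
   (coefficients of z_0, z_1, z_2): *)
Definition cone_normal (C : numClosedFieldType) (n : nat) (a b c : 'I_n -> C)
  (k : 'I_n.+1) : 'rV[C]_3 :=
  match unlift ord0 k with
  | None => \row_(j < 3) (if j == 0 :> nat then 1 else 0)
  | Some i => \row_(j < 3) (if j == 0 :> nat then c i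
                            else if j == 1 :> nat then a i else b i)
  end.

(* A triple of hyperplanes of the (central, rank <= 3) cone is dependent iff
   its normals are linearly dependent. *)
Definition cone_dependent (C : numClosedFieldType) (n : nat) (a b c : 'I_n -> C)
  (p q r : 'I_n.+1) : bool :=
  \det (\matrix_(s < 3, j < 3)
          (if s == 0 :> nat then cone_normal a b c p 0 j
           else if s == 1 :> nat then cone_normal a b c q 0 j
           else cone_normal a b c r 0 j)) == 0.

(* Exterior algebra degree 2 modelled as skew-symmetric (n+1)x(n+1) matrices:
   e_p e_q  <->  E p q := delta_mx p q - delta_mx q p. *)
Definition ewedge2 (C : numClosedFieldType) (m : nat) (p q : 'I_m) : 'M[C]_m :=
  delta_mx p q - delta_mx q p.

(* wedge of two degree-one elements a = sum a_p e_p, b = sum b_q e_q *)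
Definition wedge1 (C : numClosedFieldType) (m : nat) (x y : 'rV[C]_m) : 'M[C]_m :=
  x^T *m y - y^T *m x.

Definition bd3 (C : numClosedFieldType) (m : nat) (p q r : 'I_m) : 'M[C]_m :=
  ewedge2 C q r - ewedge2 C p r + ewedge2 C p q.

(* Degree-2 part I^2 of the Orlik-Solomon ideal of the cone: spanned by the
   boundaries of dependent triples (there are no dependent sets of size <= 2,
   the hyperplanes of the cone being distinct). *)
Definition OS_ideal2 (C : numClosedFieldType) (n : nat) (a b c : 'I_n -> C)
  : {vspace 'M[C]_n.+1} :=
  (\sum_(p < n.+1) \sum_(q < n.+1) \sum_(r < n.+1 | ((p < q)%N && (q < r)%N) && cone_dependent a b c p q r)
      <[ bd3 C p q r ]>)%VS.

(* a in R^1(cA): H^1(A, a /\ .) <> 0, i.e. the kernel of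
   a /\ . : A^1 -> A^2 = E^2 / I^2 strictly contains the image of
   a . : A^0 = C -> A^1 (which is the span of a). *)
Definition resonant (C : numClosedFieldType) (n : nat) (a b c : 'I_n -> C)
  (x : 'rV[C]_n.+1) : Prop :=
  exists y : 'rV[C]_n.+1, wedge1 x y \in OS_ideal2 a b c /\ y \notin <[x]>%VS.

Definition resonance_component (C : numClosedFieldType) (n : nat) (a b c : 'I_n -> C)
  (V : {vspace 'rV[C]_n.+1}) : Prop :=
  (forall x, x \in V -> resonant a b c x) /\
  (forall W : {vspace 'rV[C]_n.+1},
      (V <= W)%VS -> (forall x, x \in W -> resonant a b c x) -> W = V).

Definition global_component (C : numClosedFieldType) (n : nat)
  (V : {vspace 'rV[C]_n.+1}) : Prop :=
  forall k : 'I_n.+1, ~ (forall x, x \in V -> x 0 k = 0).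

(* Main.v *)
Require Import Defs.
From HB Require Import structures.
From mathcomp Require Import all_boot all_order all_algebra ring.
From Stdlib Require Import Relations Classical.
Set Implicit Arguments. Unset Strict Implicit. Unset Printing Implicit Defensive.
Import Order.TTheory GRing.Theory Num.Theory.
Local Open Scope ring_scope.

Lemma det3 (C : comNzRingType) (F : nat -> nat -> C) :
  \det (\matrix_(i < 3, j < 3) F i j) =
  F 0%N 0%N * (F 1%N 1%N * F 2%N 2%N - F 1%N 2%N * F 2%N 1%N)
 - F 0%N 1%N * (F 1%N 0%N * F 2%N 2%N - F 1%N 2%N * F 2%N 0%N)
 + F 0%N 2%N * (F 1%N 0%N * F 2%N 1%N - F 1%N 1%N * F 2%N 0%N).
Proof.
rewrite (expand_det_row _ 0) !big_ord_recr big_ord0 /cofactor /=.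
rewrite !(expand_det_row _ 0) !big_ord_recr big_ord0 /cofactor /= !det_mx11 !mxE /=.
rewrite !big_ord0 /bump /= !expr0 !expr1 !addn0 !add0n; simpl; ring.
Qed.

Lemma exists_notin (C : numClosedFieldType) (s : seq C) : exists t, t \notin s.
Proof.
suff [t [t0 Ht]] : exists t : C, 0 <= t /\ forall u, u \in s -> `|u| < t.
  exists t; apply/negP => /Ht; rewrite ger0_norm // ltxx //.
elim: s => [|h s [t [t0 Ht]]]; first by exists 0; split.
exists (t + `|h| + 1); split.
  by rewrite !addr_ge0.
move=> u; rewrite inE => /orP[/eqP->|/Ht ut].
  exact: ltr_pwDr ltr01 (ler_wpDl t0 (lexx _)).
apply: lt_le_trans ut _.
exact: ler_wpDr ler01 (ler_wpDr (normr_ge0 _) (lexx _)).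
Qed.

Lemma generic (C : numClosedFieldType) (m : nat) (V : {vspace 'rV[C]_m}) :
  (forall k : 'I_m, exists v, v \in V /\ v 0 k != 0) ->
  exists x, x \in V /\ forall k, x 0 k != 0.
Proof.
move=> H.
suff: forall s, exists x, x \in V /\ forall k : 'I_m, (k < s)%N -> x 0 k != 0.
  move/(_ m) => [x [xV Hx]]; exists x; split => // k; exact: Hx (ltn_ord k).
elim => [|s [x [xV Hx]]]; first by exists 0; split; [exact: mem0v|].
case: (ltnP s m) => hs; last first.
  exists x; split=> // k _; apply: Hx; exact: leq_trans (ltn_ord k) hs.
set k0 := Ordinal hs.
have [v [vV v0]] := H k0.
case: (eqVneq (x 0 k0) 0) => xk0; last first.
  exists x; split => // k; rewrite ltnS leq_eqVlt => /orP[/eqP ek|/Hx //].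
  by have -> : k = k0 by apply: val_inj.
have [t tn] := exists_notin (0 :: [seq - x 0 k / v 0 k | k <- enum 'I_m]).
exists (x + t *: v); split; first by rewrite memvD // memvZ.
move: tn; rewrite inE negb_or => /andP[t0 tn].
move=> k; rewrite ltnS leq_eqVlt => /orP[/eqP ek|ks].
  have -> : k = k0 by apply: val_inj.
  by rewrite !mxE xk0 add0r mulf_neq0.
rewrite !mxE; apply/negP => /eqP E.
case: (eqVneq (v 0 k) 0) => vk.
  by move: E (Hx k ks); rewrite vk mulr0 addr0 => ->; rewrite eqxx.
move: tn => /negP; apply; apply/mapP; exists k; first by rewrite mem_enum.
rewrite (_ : x 0 k = - (t * v 0 k)); first by rewrite opprK mulfK.

by apply/eqP; rewrite -addr_eq0 E.
Qed.

Definition cn (C : numClosedFieldType) (n : nat) (a b c : 'I_n -> C)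
  (k : 'I_n.+1) (j : nat) : C := cone_normal a b c k 0 (inord j).

Definition D3 (C : numClosedFieldType) (u v w : nat -> C) : C :=
  u 0%N * (v 1%N * w 2%N - v 2%N * w 1%N) - u 1%N * (v 0%N * w 2%N - v 2%N * w 0%N)
  + u 2%N * (v 0%N * w 1%N - v 1%N * w 0%N).

Lemma cnL (C : numClosedFieldType) (n : nat) (a b c : 'I_n -> C) i :
  [/\ cn a b c (lift ord0 i) 0 = c i, cn a b c (lift ord0 i) 1 = a i &
      cn a b c (lift ord0 i) 2 = b i].
Proof. by rewrite /cn /cone_normal liftK !mxE !inordK. Qed.

Lemma cn0 (C : numClosedFieldType) (n : nat) (a b c : 'I_n -> C) :
  [/\ cn a b c ord0 0 = 1, cn a b c ord0 1 = 0 & cn a b c ord0 2 = 0].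
Proof. by rewrite /cn /cone_normal unlift_none !mxE !inordK. Qed.

Lemma depE (C : numClosedFieldType) (n : nat) (a b c : 'I_n -> C) p q r :
  cone_dependent a b c p q r = (D3 (cn a b c p) (cn a b c q) (cn a b c r) == 0).
Proof.
rewrite /cone_dependent.
have -> : (\matrix_(s < 3, j < 3)
          (if s == 0 :> nat then cone_normal a b c p 0 j
           else if s == 1 :> nat then cone_normal a b c q 0 j
           else cone_normal a b c r 0 j)) =
  \matrix_(i < 3, j < 3) (fun (s j : nat) => if s == 0%N then cn a b c p j
           else if s == 1%N then cn a b c q j else cn a b c r j) i j.
  by apply/matrixP => i j; rewrite !mxE /cn inord_val.
by rewrite (det3 (fun (s j : nat) => if s == 0%N then cn a b c p j
           else if s == 1%N then cn a b c q j else cn a b c r j)).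
Qed.

Lemma D3_12 (C : numClosedFieldType) (u v w : nat -> C) : D3 v u w = - D3 u v w.
Proof. rewrite /D3; ring. Qed.
Lemma D3_23 (C : numClosedFieldType) (u v w : nat -> C) : D3 u w v = - D3 u v w.
Proof. rewrite /D3; ring. Qed.

Definition dep3 (C : numClosedFieldType) (n : nat) (a b c : 'I_n -> C) p q r :=
  D3 (cn a b c p) (cn a b c q) (cn a b c r) == 0.

Lemma dep3_12 (C : numClosedFieldType) (n : nat) (a b c : 'I_n -> C) p q r :
  dep3 a b c q p r = dep3 a b c p q r.
Proof. by rewrite /dep3 D3_12 oppr_eq0. Qed.
Lemma dep3_23 (C : numClosedFieldType) (n : nat) (a b c : 'I_n -> C) p q r :
  dep3 a b c p r q = dep3 a b c p q r.
Proof. by rewrite /dep3 D3_23 oppr_eq0. Qed.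

Definition L (C : numClosedFieldType) (n : nat) (a b c : 'I_n -> C) i (p : C * C) :=
  a i * p.1 + b i * p.2 + c i.

Lemma nz2 (C : numClosedFieldType) (u v X : C) : (u, v) <> (0, 0) ->
  u * X = 0 -> v * X = 0 -> X = 0.
Proof.
move=> nz /eqP; rewrite mulf_eq0 => /orP[/eqP u0|/eqP //].
move=> /eqP; rewrite mulf_eq0 => /orP[/eqP v0|/eqP //].
by case: nz; rewrite u0 v0.
Qed.

Lemma edge_minor (C : numClosedFieldType) (n : nat) (a b c : 'I_n -> C) i j :
  is_line_arrangement a b c -> double_point_edge a b c i j ->
  a i * b j - a j * b i != 0.
Proof.
move=> [nz _] [_ [p [Hi [Hj [Hu _]]]]]; apply/eqP => M.
have := Hu (p.1 + b i, p.2 - a i).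
move: Hi Hj; rewrite /on_line /= => Hi Hj.
have e1 : a i * (p.1 + b i) + b i * (p.2 - a i) + c i = 0.
  by rewrite -Hi; ring.
have e2 : a j * (p.1 + b i) + b j * (p.2 - a i) + c j = 0.
  rewrite -Hj (_ : a j * (p.1 + b i) + b j * (p.2 - a i) + c j =
     a j * p.1 + b j * p.2 + c j - (a i * b j - a j * b i)); first by rewrite M subr0.
  ring.
move=> /(_ e1 e2); case: p {Hi Hj Hu e1 e2} => p1 p2 /= [] E1 E2.
have bi0 : b i = 0 by apply: (@addrI _ p1); rewrite addr0.
have ai0 : a i = 0 by apply/oppr_inj/(@addrI _ p2); rewrite oppr0 addr0.
by apply: (nz i); rewrite ai0 bi0.
Qed.

Lemma edge_indep (C : numClosedFieldType) (n : nat) (a b c : 'I_n -> C) i j z :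
  is_line_arrangement a b c -> double_point_edge a b c i j ->
  z != lift ord0 i -> z != lift ord0 j -> ~~ dep3 a b c (lift ord0 i) (lift ord0 j) z.
Proof.
move=> Hla He.
have Hm := edge_minor Hla He.
have [ci ai bi] := cnL a b c i; have [cj aj bj] := cnL a b c j.
rewrite /dep3 /D3 ci ai bi cj aj bj.
case: (unliftP ord0 z) => [k ->|->] zi zj.
  have [ck ak bk] := cnL a b c k; rewrite ck ak bk.
  have ki : k != i by apply: contraNneq zi => ->.
  have kj : k != j by apply: contraNneq zj => ->.
  case: He => _ [p [Hi [Hj [_ Hk]]]].
  have := Hk k (elimN eqP ki) (elimN eqP kj).
  move: Hi Hj; rewrite /on_line => Hi Hj Hnk.
  rewrite (_ : _ - _ + _ = (a i * p.1 + b i * p.2 + c i) * (a j * b k - b j * a k)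
     - (a j * p.1 + b j * p.2 + c j) * (a i * b k - b i * a k)
     + (a k * p.1 + b k * p.2 + c k) * (a i * b j - a j * b i)); last by ring.
  rewrite Hi Hj !mul0r subrr add0r mulf_neq0 //; exact/eqP.
have [c0 a0 b0] := cn0 a b c; rewrite c0 a0 b0.
rewrite (_ : _ - _ + _ = a i * b j - a j * b i) //; ring.
Qed.

Definition par (C : numClosedFieldType) (n : nat) (a b : 'I_n -> C) k l :=
  a k * b l == a l * b k.

Definition inX (C : numClosedFieldType) (n : nat) (a b : 'I_n -> C) i0 (w : 'I_n.+1) :=
  match unlift ord0 w with None => true | Some k => par a b k i0 end.

Lemma same_line (C : numClosedFieldType) (n : nat) (a b c : 'I_n -> C) k i0 :
  is_line_arrangement a b c -> k != i0 -> a k * b i0 = a i0 * b k ->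
  a k * c i0 = a i0 * c k -> b k * c i0 = b i0 * c k -> False.
Proof.
move=> [nz dist] ki r1 r2 r3.
have [p Hp] := dist k i0 (elimN eqP ki); apply: Hp; rewrite /on_line.
have E1 : a i0 * (a k * p.1 + b k * p.2 + c k) = a k * (a i0 * p.1 + b i0 * p.2 + c i0).
  apply/eqP; rewrite -subr_eq0; apply/eqP.
  rewrite (_ : _ - _ = (a i0 * b k - a k * b i0) * p.2 + (a i0 * c k - a k * c i0)); last by ring.
  by rewrite r1 r2 -(mulrC (b k)) -(mulrC (c k)) !subrr mul0r addr0.
have E2 : b i0 * (a k * p.1 + b k * p.2 + c k) = b k * (a i0 * p.1 + b i0 * p.2 + c i0).
  apply/eqP; rewrite -subr_eq0; apply/eqP.
  rewrite (_ : _ - _ = (b i0 * a k - b k * a i0) * p.1 + (b i0 * c k - b k * c i0)); last by ring.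
  by rewrite (mulrC (b i0)) r1 r3 (mulrC (b k)) !subrr mul0r addr0.
split => H.
  apply: (nz2 (nz k)); by rewrite -?E1 -?E2 H mulr0.
apply: (nz2 (nz i0)); by rewrite ?E1 ?E2 H mulr0.
Qed.

Lemma inX_dep (C : numClosedFieldType) (n : nat) (a b c : 'I_n -> C) i0 u w :
  is_line_arrangement a b c -> u != w -> u != lift ord0 i0 -> w != lift ord0 i0 ->
  dep3 a b c u w (lift ord0 i0) -> inX a b i0 u -> inX a b i0 w.
Proof.
move=> Hla uw uv wv; rewrite /dep3 /inX /D3.
have [ci ai bi] := cnL a b c i0; rewrite ci ai bi.
case: (unliftP ord0 u) => [k Ek|Ek]; subst u; rewrite ?liftK ?unlift_none.
  case: (unliftP ord0 w) => [l ->|->]; rewrite ?liftK ?unlift_none //.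
  have [ck ak bk] := cnL a b c k; have [cl al bl] := cnL a b c l.
  rewrite ck ak bk cl al bl /par => D0 /eqP rho.
  have ki : k != i0 by apply: contraNneq uv => ->.
  case: (boolP (a l * b i0 == a i0 * b l)) => // npar; exfalso.
  have Q : a i0 * b l - a l * b i0 != 0.
    by rewrite subr_eq0 eq_sym.
  have rho0 : a i0 * b k - a k * b i0 = 0 by rewrite rho subrr.
  move/eqP: D0 => D0.
  have Ea : (a k * c i0 - a i0 * c k) * (a i0 * b l - a l * b i0) = 0.
    have -> : (a k * c i0 - a i0 * c k) * (a i0 * b l - a l * b i0) =
      a i0 * (c k * (a l * b i0 - b l * a i0) - a k * (c l * b i0 - b l * c i0) +
        b k * (c l * a i0 - a l * c i0)) - (a i0 * b k - a k * b i0) * (c l * a i0 - a l * c i0)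
      by ring.
    by rewrite D0 rho0 mulr0 mul0r subrr.
  have Eb : (b k * c i0 - b i0 * c k) * (a i0 * b l - a l * b i0) = 0.
    have -> : (b k * c i0 - b i0 * c k) * (a i0 * b l - a l * b i0) =
      b i0 * (c k * (a l * b i0 - b l * a i0) - a k * (c l * b i0 - b l * c i0) +
        b k * (c l * a i0 - a l * c i0)) - (a i0 * b k - a k * b i0) * (c l * b i0 - b l * c i0)
      by ring.
    by rewrite D0 rho0 mulr0 mul0r subrr.
  move/eqP: Ea; rewrite mulf_eq0 (negbTE Q) orbF subr_eq0 => /eqP Ea.
  move/eqP: Eb; rewrite mulf_eq0 (negbTE Q) orbF subr_eq0 => /eqP Eb.
  exact: (same_line Hla ki rho Ea Eb).
case: (unliftP ord0 w) => [l ->|->]; rewrite ?liftK ?unlift_none //.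
have [cl al bl] := cnL a b c l; have [c0 a0 b0] := cn0 a b c.
rewrite cl al bl c0 a0 b0 /par => /eqP D0 _.
apply/eqP; apply/eqP; rewrite -subr_eq0; apply/eqP; rewrite -D0; ring.
Qed.

Lemma inX_iff (C : numClosedFieldType) (n : nat) (a b c : 'I_n -> C) i0 u w :
  is_line_arrangement a b c -> u != w -> u != lift ord0 i0 -> w != lift ord0 i0 ->
  dep3 a b c u w (lift ord0 i0) -> inX a b i0 u = inX a b i0 w.
Proof.
move=> Hla uw uv wv D; apply/idP/idP.
  exact: (inX_dep Hla uw uv wv D).
apply: (inX_dep Hla _ wv uv); first by rewrite eq_sym.
by rewrite dep3_12.
Qed.

Lemma kill (C : numClosedFieldType) (n : nat) (a b c : 'I_n -> C)
  (phi : 'M[C]_n.+1 -> C)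
  (phiD : forall M N, phi (M + N) = phi M + phi N)
  (phiZ : forall k M, phi (k *: M) = k * phi M)
  (H : forall p q r : 'I_n.+1, (p < q)%N -> (q < r)%N -> cone_dependent a b c p q r ->
        phi (bd3 C p q r) = 0) :
  forall M, M \in OS_ideal2 a b c -> phi M = 0.
Proof.
have phi0 : phi 0 = 0 by rewrite -(scale0r 0) phiZ mul0r.
pose Q (U : {vspace 'M[C]_n.+1}) := forall M, M \in U -> phi M = 0.
have Q0 : Q 0%VS by move=> N; rewrite memv0 => /eqP ->.
have QD : forall U W, Q U -> Q W -> Q (U + W)%VS.
  by move=> U W QU QW N /memv_addP [u uU [w wW ->]]; rewrite phiD QU ?QW ?addr0.
rewrite /OS_ideal2; apply: (big_ind Q) => // p _; apply: (big_ind Q) => // q _.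
apply: (big_ind Q) => // r /andP[/andP[pq qr] dep] N /vlineP[k ->].
by rewrite phiZ H ?mulr0.
Qed.

Lemma ewE (C : numClosedFieldType) (m : nat) (s t u w : 'I_m) :
  ewedge2 C s t u w = ((u == s) && (w == t))%:R - ((u == t) && (w == s))%:R.
Proof. by rewrite /ewedge2 !mxE. Qed.

Lemma wedgeE (C : numClosedFieldType) (m : nat) (x y : 'rV[C]_m) u w :
  wedge1 x y u w = x 0 u * y 0 w - y 0 u * x 0 w.
Proof. by rewrite /wedge1 !mxE !big_ord1 !mxE. Qed.

Lemma bd3E (C : numClosedFieldType) (m : nat) (p q r u w : 'I_m) :
  bd3 C p q r u w = ewedge2 C q r u w - ewedge2 C p r u w + ewedge2 C p q u w.
Proof. by rewrite /bd3 /ewedge2 !mxE. Qed.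

Lemma ord_neq (m : nat) (p q : 'I_m) : (p < q)%N -> p != q.
Proof. by move=> h; rewrite -val_eqE /= neq_ltn h. Qed.

Lemma edge_entry (C : numClosedFieldType) (n : nat) (a b c : 'I_n -> C) i j
  (p q r : 'I_n.+1) :
  is_line_arrangement a b c -> double_point_edge a b c i j ->
  (p < q)%N -> (q < r)%N -> cone_dependent a b c p q r ->
  bd3 C p q r (lift ord0 i) (lift ord0 j) = 0.
Proof.
move=> Hla He pq qr; rewrite depE => dep.
have pq' := ord_neq pq; have qr' := ord_neq qr; have pr' := ord_neq (ltn_trans pq qr).
have Bz : forall s t z, z != s -> z != t -> dep3 a b c s t z ->
    ewedge2 C s t (lift ord0 i) (lift ord0 j) = 0.
  move=> s t z zs zt D; rewrite ewE.
  case: (boolP ((lift ord0 i == s) && (lift ord0 j == t))) => [/andP[/eqP E1 /eqP E2]|_].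
    by subst s t; move: (edge_indep Hla He zs zt); rewrite D.
  case: (boolP ((lift ord0 i == t) && (lift ord0 j == s))) => [/andP[/eqP E1 /eqP E2]|_].
    by subst s t; move: (edge_indep Hla He zt zs); rewrite dep3_12 D.
  by rewrite subrr.
rewrite bd3E.
have dep' : dep3 a b c p q r := dep.
rewrite (Bz q r p) ?(Bz p r q) ?(Bz p q r) ?subrr ?add0r //.
all: try by rewrite eq_sym.
- by rewrite dep3_23.
- by rewrite dep3_23 dep3_12.
Qed.

Lemma sumind (C : numClosedFieldType) (m : nat) (P : pred 'I_m) (s : 'I_m) (B : bool) :
  \sum_(w | P w) (((w == s) && B)%:R : C) = (P s && B)%:R.
Proof.
case: (boolP (P s)) => Ps /=.
  rewrite (bigD1 s) //= eqxx /= big1 ?addr0 // => w /andP[_ /negbTE ->] //.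
rewrite big1 // => w Pw; have -> : (w == s) = false.
  by apply/negbTE; apply: contraNneq Ps => <-.
by [].
Qed.

Definition psi (C : numClosedFieldType) (n : nat) (a b : 'I_n -> C) i0 (M : 'M[C]_n.+1) :=
  \sum_(w | inX a b i0 w) M w (lift ord0 i0).

Lemma psiE (C : numClosedFieldType) (n : nat) (a b : 'I_n -> C) i0 (s t : 'I_n.+1) :
  psi a b i0 (ewedge2 C s t) =
  (inX a b i0 s && (lift ord0 i0 == t))%:R - (inX a b i0 t && (lift ord0 i0 == s))%:R.
Proof.
rewrite /psi; under eq_bigr => w _ do rewrite ewE.
by rewrite sumrB !sumind.
Qed.

Lemma psiD (C : numClosedFieldType) (n : nat) (a b : 'I_n -> C) i0 M N :
  psi a b i0 (M + N) = psi a b i0 M + psi a b i0 N.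
Proof. by rewrite /psi -big_split; apply: eq_bigr => w _; rewrite mxE. Qed.

Lemma psiZ (C : numClosedFieldType) (n : nat) (a b : 'I_n -> C) i0 k M :
  psi a b i0 (k *: M) = k * psi a b i0 M.
Proof. by rewrite /psi mulr_sumr; apply: eq_bigr => w _; rewrite mxE. Qed.

Lemma psiN (C : numClosedFieldType) (n : nat) (a b : 'I_n -> C) i0 M :
  psi a b i0 (- M) = - psi a b i0 M.
Proof. by rewrite /psi -sumrN; apply: eq_bigr => w _; rewrite mxE. Qed.

Lemma psi_bd3 (C : numClosedFieldType) (n : nat) (a b c : 'I_n -> C) i0
  (p q r : 'I_n.+1) :
  is_line_arrangement a b c ->
  (p < q)%N -> (q < r)%N -> cone_dependent a b c p q r ->
  psi a b i0 (bd3 C p q r) = 0.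
Proof.
move=> Hla pq qr; rewrite depE => dep.
have dep' : dep3 a b c p q r := dep.
have pq' := ord_neq pq; have qr' := ord_neq qr; have pr' := ord_neq (ltn_trans pq qr).
have -> : psi a b i0 (bd3 C p q r) =
   psi a b i0 (ewedge2 C q r) - psi a b i0 (ewedge2 C p r) + psi a b i0 (ewedge2 C p q).
  by rewrite /psi -sumrB -big_split /=; apply: eq_bigr => w _; rewrite bd3E.
rewrite !psiE.
case: (eqVneq (lift ord0 i0) p) => [Ep|Np].
  subst p; rewrite ?(negbTE pq') ?(negbTE pr') ?andbF ?andbT.
  rewrite (@inX_iff _ _ a b c i0 r q) //; first (rewrite /=; ring).
  all: try by [rewrite eq_sym | rewrite dep3_12 dep3_23 dep3_12].
case: (eqVneq (lift ord0 i0) q) => [Eq|Nq].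
  subst q; rewrite ?(negbTE qr') ?andbF ?andbT.
  rewrite (@inX_iff _ _ a b c i0 p r) //; first (rewrite /=; ring).
  all: try by [rewrite eq_sym | rewrite dep3_23].
case: (eqVneq (lift ord0 i0) r) => [Er|Nr].
  subst r; rewrite ?andbF ?andbT.
  rewrite (@inX_iff _ _ a b c i0 q p) //; first (rewrite /=; ring).
  all: try by [rewrite eq_sym | rewrite dep3_12].
rewrite ?andbF /=; ring.
Qed.

Theorem corollary3p2 (C : numClosedFieldType) (n : nat) (a b c : 'I_n -> C) :
  is_line_arrangement a b c ->
  graph_connected (double_point_edge a b c) ->
  forall V : {vspace 'rV[C]_n.+1},
    resonance_component a b c V -> ~ global_component V.
Proof.
move=> Hla Hconn V [Hres _] Hglob.
have Hk : forall k, exists v, v \in V /\ v 0 k != 0.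
  move=> k; apply: NNPP => H; apply: (Hglob k) => z zV.
  case: (eqVneq (z 0 k) 0) => // nz; exfalso; apply: H; by exists z.
have [x [xV xnz]] := generic Hk.
have [y [Hy yn]] := Hres x xV.
apply: (negP yn); apply/vlineP.
case: n a b c Hla Hconn V Hres Hglob Hk x xV xnz y Hy yn => [|n] a b c Hla Hconn V Hres Hglob Hk x xV xnz y Hy yn.
  exists (y 0 0 / x 0 0); apply/matrixP => i j.
  by rewrite (ord1 i) (ord1 j) mxE divfK.
have E : forall i j, double_point_edge a b c i j ->
    y 0 (lift ord0 i) * x 0 (lift ord0 j) = y 0 (lift ord0 j) * x 0 (lift ord0 i).
  move=> i j He.
  have := kill (phi := fun M : 'M[C]_n.+2 => M (lift ord0 i) (lift ord0 j)) _ _ _ Hy.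
  rewrite wedgeE => H.
  have {}H := H (fun M N => mxE _ _ _ _) (fun k M => mxE _ _ _ _)
    (fun p q r pq qr D => edge_entry Hla He pq qr D).
  by move/eqP: H; rewrite subr_eq0 => /eqP H; rewrite -H mulrC.
pose R i j := y 0 (lift ord0 i) * x 0 (lift ord0 j) = y 0 (lift ord0 j) * x 0 (lift ord0 i).
have HR : forall i j, R i j.
  move=> i j; elim: (Hconn i j) => [i' j' He|i'|i' j' k' _ H1 _ H2].
  - exact: E.
  - by [].
  rewrite /R in H1 H2 *.
  have xj := xnz (lift ord0 j').
  apply: (mulIf xj).
  rewrite -mulrA (mulrC (x 0 _)) mulrA H1 -mulrA (mulrC (x 0 _)) mulrA H2; ring.
set i0 : 'I_n.+1 := ord0.
set t := y 0 (lift ord0 i0) / x 0 (lift ord0 i0).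
have Hyk : forall k, y 0 (lift ord0 k) = t * x 0 (lift ord0 k).
  move=> k; rewrite /t mulrAC -(HR k i0) mulfK //.
have H0 := kill (phi := psi a b i0) (psiD a b i0) (psiZ a b i0)
    (fun p q r pq qr D => psi_bd3 i0 Hla pq qr D) Hy.
rewrite /psi (bigD1 ord0) /= in H0; last by rewrite /inX unlift_none.
rewrite big1 ?addr0 in H0; last first.
  move=> w /andP[_ w0]; case: (unliftP ord0 w) w0 => [k ->|->] w0; last by rewrite eqxx in w0.
  by rewrite wedgeE !Hyk; ring.
rewrite wedgeE Hyk in H0.
have Hy0 : y 0 0 = t * x 0 0.
  have xv := xnz (lift ord0 i0).
  apply/eqP; rewrite -subr_eq0; apply/eqP; apply: (mulIf xv).
  rewrite mul0r; transitivity (- (x 0 0 * (t * x 0 (lift ord0 i0)) - y 0 0 * x 0 (lift ord0 i0))); first ring.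
  by rewrite H0 oppr0.
exists t; apply/matrixP => i j; rewrite (ord1 i) mxE.
by case: (unliftP ord0 j) => [k ->|->].
Qed.
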